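(* Let $G$ be a quasitopological group and define groups with topology $G_\alpha$ (all with underlying group $G$) for ordinals $\alpha$ by transfinite recursion: $G_0=G$; $G_{\alpha}=c(G_{\alpha-1})$ if $\alpha$ is a successor ordinal; and, if $\alpha$ is a limit ordinal, $G_\alpha$ has topology $\bigcap_{\beta<\alpha}\mathcal T_{G_\beta}$, where $\mathcal T_{G_\beta}$ is the topology of $G_\beta$. Then each $G_\alpha$ is a quasitopological group, and there is an ordinal $\alpha$ such that $G_\alpha=\tau(G)$ (i.e. $\mathcal T_{G_\alpha}$ equals the topology of $\tau(G)$).
   Context: A quasitopological group is a group with a topology in which inversion is continuous and multiplication is separately continuous in each variable. For a quasitopological group $H$, $c(H)$ is the group $H$ with the quotient topology with respect to the multiplication map $\mu_H:H\times H\to H$. $F_M(S)$ is the free (Markov) topological group on a space $S$. For a group with topology $G$, $\tau(G)$ is $G$ with the quotient topology with respect to the multiplication epimorphism $m_G:F_M(G)\to G$ sending each generator $g$ to $g$. *)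

(* Defs.v *)
From Stdlib Require Import List Bool ClassicalEpsilon.
Import ListNotations.


Definition is_topology {X : Type} (O : (X -> Prop) -> Prop) : Prop :=
  O (fun _ => True) /\
  (forall U V, O U -> O V -> O (fun x => U x /\ V x)) /\
  (forall (F : (X -> Prop) -> Prop), (forall U, F U -> O U) ->
      O (fun x => exists U, F U /\ U x)).

Definition same_top {X : Type} (O1 O2 : (X -> Prop) -> Prop) : Prop :=
  forall U, O1 U <-> O2 U.

Definition prod_open {A B : Type} (OA : (A -> Prop) -> Prop) (OB : (B -> Prop) -> Prop)
  (W : A * B -> Prop) : Prop :=
  forall p, W p -> exists U V, OA U /\ OB V /\ U (fst p) /\ V (snd p) /\
      (forall a b, U a -> V b -> W (a, b)).

Definition is_group {X : Type} (mul : X -> X -> X) (inv : X -> X) (e : X) : Prop :=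
  (forall x y z, mul x (mul y z) = mul (mul x y) z) /\
  (forall x, mul e x = x) /\ (forall x, mul x e = x) /\
  (forall x, mul (inv x) x = e) /\ (forall x, mul x (inv x) = e).

Definition quasitopological {X : Type} (mul : X -> X -> X) (inv : X -> X)
  (O : (X -> Prop) -> Prop) : Prop :=
  is_topology O /\
  (forall U, O U -> O (fun x => U (inv x))) /\
  (forall a U, O U -> O (fun x => U (mul a x)) /\ O (fun x => U (mul x a))).

Definition group_topology {X : Type} (mul : X -> X -> X) (inv : X -> X)
  (O : (X -> Prop) -> Prop) : Prop :=
  is_topology O /\
  (forall U, O U -> O (fun x => U (inv x))) /\
  (forall W, O W -> prod_open O O (fun p => W (mul (fst p) (snd p)))).

(* c(H): quotient topology of H x H with respect to multiplication *)
Definition c_top {X : Type} (mul : X -> X -> X) (O : (X -> Prop) -> Prop)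
  (V : X -> Prop) : Prop :=
  prod_open O O (fun p => V (mul (fst p) (snd p))).

(* a letter (true, x) is x, (false, x) is x^{-1} *)
Definition word (X : Type) := list (bool * X).

Definition xeqb {X : Type} (x y : X) : bool :=
  if excluded_middle_informative (x = y) then true else false.

Definition cancelb {X : Type} (a b : bool * X) : bool :=
  negb (Bool.eqb (fst a) (fst b)) && xeqb (snd a) (snd b).

Fixpoint reduced {X : Type} (w : word X) : Prop :=
  match w with
  | a :: ((b :: _) as w') => cancelb a b = false /\ reduced w'
  | _ => True
  end.

Definition cons_red {X : Type} (a : bool * X) (w : word X) : word X :=
  match w with
  | b :: w' => if cancelb a b then w' else a :: w
  | [] => [a]
  end.

Definition wnorm {X : Type} (w : word X) : word X := fold_right cons_red [] w.

Lemma reduced_tail {X : Type} (a : bool * X) (w : word X) :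
  reduced (a :: w) -> reduced w.
Proof. destruct w; simpl; tauto. Qed.

Lemma cons_red_reduced {X : Type} (a : bool * X) (w : word X) :
  reduced w -> reduced (cons_red a w).
Proof.
  intros H. destruct w as [|b w']; simpl; [exact I|].
  destruct (cancelb a b) eqn:E.
  - exact (reduced_tail b w' H).
  - simpl. split; [exact E| exact H].
Qed.

Lemma wnorm_reduced {X : Type} (w : word X) : reduced (wnorm w).
Proof.
  induction w as [|a w IH]; simpl; [exact I|].
  apply cons_red_reduced; exact IH.
Qed.

Definition FG (X : Type) := { w : word X | reduced w }.

Definition fg_of {X : Type} (w : word X) : FG X := exist _ (wnorm w) (wnorm_reduced w).

Definition fg_mul {X : Type} (u v : FG X) : FG X := fg_of (proj1_sig u ++ proj1_sig v).

Definition letter_inv {X : Type} (a : bool * X) : bool * X := (negb (fst a), snd a).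

Definition fg_inv {X : Type} (u : FG X) : FG X := fg_of (rev (map letter_inv (proj1_sig u))).

Definition fg_eta {X : Type} (x : X) : FG X := fg_of [(true, x)].

(* F_M(S): the Markov free topological group topology on F(X), i.e. the
   finest group topology on F(X) for which fg_eta : S -> F(X) is continuous
   (the topology generated by all such group topologies). *)
Definition FM_open {X : Type} (OS : (X -> Prop) -> Prop) (W : FG X -> Prop) : Prop :=
  forall O : (FG X -> Prop) -> Prop,
    is_topology O ->
    (forall O' : (FG X -> Prop) -> Prop,
        group_topology (@fg_mul X) (@fg_inv X) O' ->
        (forall V, O' V -> OS (fun x : X => V (fg_eta x))) ->
        forall V, O' V -> O V) ->
    O W.

Definition meval {X : Type} (mul : X -> X -> X) (inv : X -> X) (e : X) (w : word X) : X :=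
  fold_right (fun (a : bool * X) (acc : X) => mul (if fst a then snd a else inv (snd a)) acc) e w.

(* tau(G): quotient topology of F_M(G) with respect to m_G *)
Definition tau_open {X : Type} (mul : X -> X -> X) (inv : X -> X) (e : X)
  (O : (X -> Prop) -> Prop) (V : X -> Prop) : Prop :=
  FM_open O (fun u : FG X => V (meval mul inv e (proj1_sig u))).

(* (I, lt) is a (strict) well-order; it stands for an ordinal. *)
Definition well_order {I : Type} (lt : I -> I -> Prop) : Prop :=
  well_founded lt /\
  (forall a b c, lt a b -> lt b c -> lt a c) /\
  (forall a b, lt a b \/ a = b \/ lt b a).

(* S : I -> topology on X satisfies the recursion
   G_0 = G, G_(b+1) = c(G_b), G_a = bigcap_(b<a) G_b for limit a *)
Definition transfinite_seq {X I : Type} (mul : X -> X -> X) (O : (X -> Prop) -> Prop)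
  (lt : I -> I -> Prop) (S : I -> (X -> Prop) -> Prop) : Prop :=
  (forall a, (forall b, ~ lt b a) -> same_top (S a) O) /\
  (forall a b, lt b a -> (forall c, ~ (lt b c /\ lt c a)) ->
      same_top (S a) (c_top mul (S b))) /\
  (forall a, (exists b, lt b a) -> (forall b, lt b a -> exists c, lt b c /\ lt c a) ->
      same_top (S a) (fun U => forall b, lt b a -> S b U)).

(* Main.v *)
Require Import Defs.
From Stdlib Require Import List Bool Classical FunctionalExtensionality PropExtensionality ProofIrrelevance ClassicalEpsilon.
Import ListNotations.

Lemma pred_ext {X : Type} (A B : X -> Prop) : (forall x, A x <-> B x) -> A = B.
Proof. intros H. apply functional_extensionality; intros x; apply propositional_extensionality; auto. Qed.

Lemma top_ext {X : Type} (A B : (X -> Prop) -> Prop) : same_top A B -> A = B.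
Proof. intros H. apply functional_extensionality; intros x; apply propositional_extensionality; auto. Qed.

Lemma open_ext {X : Type} (O : (X -> Prop) -> Prop) (A B : X -> Prop) :
  O A -> (forall x, A x <-> B x) -> O B.
Proof. intros H E. rewrite <- (pred_ext A B E). exact H. Qed.

Lemma open_of_nbhd {X : Type} (O : (X -> Prop) -> Prop) : is_topology O ->
  forall A, (forall x, A x -> exists U, O U /\ U x /\ forall y, U y -> A y) -> O A.
Proof.
  intros [_ [_ Hu]] A H.
  apply (open_ext O (fun x => exists U, (O U /\ forall y, U y -> A y) /\ U x)).
  - apply Hu. intros U [HU _]; exact HU.
  - intros x; split.
    + intros [U [[_ HU] Ux]]; auto.
    + intros Ax. destruct (H x Ax) as [U [OU [Ux HU]]]. exists U; auto.
Qed.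

Lemma top_full {X} (O : (X -> Prop) -> Prop) : is_topology O -> O (fun _ => True).
Proof. intros [H _]; exact H. Qed.

Lemma g_inv_mul {X} (mul : X -> X -> X) inv e : is_group mul inv e ->
  forall x y, inv (mul x y) = mul (inv y) (inv x).
Proof.
  intros (A & L & R & IL & IR) x y.
  assert (H : mul (mul x y) (mul (inv y) (inv x)) = e).
  { rewrite <- A. rewrite (A y). rewrite IR, L. apply IR. }
  transitivity (mul (inv (mul x y)) (mul (mul x y) (mul (inv y) (inv x)))).
  - rewrite H, R; reflexivity.
  - rewrite A, IL, L; reflexivity.
Qed.

Lemma g_inv_inv {X} (mul : X -> X -> X) inv e : is_group mul inv e ->
  forall x, inv (inv x) = x.
Proof.
  intros (A & L & R & IL & IR) x.
  transitivity (mul (inv (inv x)) (mul (inv x) x)).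
  - rewrite IL, R; reflexivity.
  - rewrite A, IL, L; reflexivity.
Qed.

Lemma prod_open_mono {A B} (O1 O2 : (A -> Prop) -> Prop) (P1 P2 : (B -> Prop) -> Prop) W :
  (forall U, O1 U -> O2 U) -> (forall U, P1 U -> P2 U) -> prod_open O1 P1 W -> prod_open O2 P2 W.
Proof.
  intros H1 H2 H p Wp. destruct (H p Wp) as (U & V & HU & HV & Ua & Vb & HUV).
  exists U, V; auto 10.
Qed.

Lemma c_top_topology {X} (mul : X -> X -> X) O : is_topology O -> is_topology (c_top mul O).
Proof.
  intros HO. pose proof HO as (Hf & Hi & Hu). unfold c_top. split; [|split].
  - intros p _. exists (fun _ => True), (fun _ => True); auto 10.
  - intros U V HU HV p [Up Vp].
    destruct (HU p Up) as (U1 & V1 & a1 & b1 & c1 & d1 & e1).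
    destruct (HV p Vp) as (U2 & V2 & a2 & b2 & c2 & d2 & e2).
    exists (fun x => U1 x /\ U2 x), (fun x => V1 x /\ V2 x).
    split; [auto|split;[auto|]]. split; [auto|split;[auto|]].
    intros a b [] []; simpl; split; [apply e1|apply e2]; auto.
  - intros F HF p [U [FU Up]].
    destruct (HF U FU p Up) as (U1 & V1 & a1 & b1 & c1 & d1 & e1).
    exists U1, V1. split;[auto|split;[auto|split;[auto|split;[auto|]]]].
    intros a b x y. exists U; split; [exact FU|]. apply (e1 a b x y).
Qed.

Lemma c_top_mono {X} (mul : X -> X -> X) (O1 O2 : (X -> Prop) -> Prop) :
  (forall U, O1 U -> O2 U) -> forall U, c_top mul O1 U -> c_top mul O2 U.
Proof. intros H U. unfold c_top. apply prod_open_mono; auto. Qed.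

Lemma c_top_sub {X} (mul : X -> X -> X) inv e O : is_group mul inv e -> is_topology O ->
  forall U, c_top mul O U -> O U.
Proof.
  intros G HO U HU. apply open_of_nbhd; auto. intros x Ux.
  destruct (HU (x, e)) as (U1 & V1 & a1 & b1 & c1 & d1 & e1).
  { simpl. destruct G as (_ & _ & R & _). rewrite R; exact Ux. }
  exists U1; repeat split; auto. intros y Uy. destruct G as (_ & _ & R & _).
  specialize (e1 y e Uy d1). simpl in e1. rewrite R in e1; exact e1.
Qed.

Lemma c_top_quasi {X} (mul : X -> X -> X) inv e O : is_group mul inv e ->
  quasitopological mul inv O -> quasitopological mul inv (c_top mul O).
Proof.
  intros G (HO & Hinv & Htr). pose proof G as (A & L & R & IL & IR).
  split; [apply c_top_topology; auto|split].
  - intros V HV p Vp. simpl in Vp.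
    rewrite (g_inv_mul mul inv e G) in Vp.
    destruct (HV (inv (snd p), inv (fst p)) Vp) as (U1 & V1 & a1 & b1 & c1 & d1 & e1).
    simpl in *. exists (fun x => V1 (inv x)), (fun x => U1 (inv x)).
    repeat split; auto. intros a b Ha Hb. simpl. rewrite (g_inv_mul mul inv e G). apply e1; auto.
  - intros a V HV. split.
    + intros p Vp. simpl in Vp. rewrite A in Vp.
      destruct (HV (mul a (fst p), snd p) Vp) as (U1 & V1 & a1 & b1 & c1 & d1 & e1).
      simpl in *. exists (fun x => U1 (mul a x)), V1. repeat split; auto.
      apply (Htr a U1 a1). intros x y Hx Hy; simpl. rewrite A. apply e1; auto.
    + intros p Vp. simpl in Vp. rewrite <- A in Vp.
      destruct (HV (fst p, mul (snd p) a) Vp) as (U1 & V1 & a1 & b1 & c1 & d1 & e1).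
      simpl in *. exists U1, (fun x => V1 (mul x a)). repeat split; auto.
      apply (Htr a V1 b1). intros x y Hx Hy; simpl. rewrite <- A. apply e1; auto.
Qed.

Definition meet {X} (F : ((X -> Prop) -> Prop) -> Prop) : (X -> Prop) -> Prop :=
  fun U => forall h, F h -> h U.

Lemma meet_quasi {X} (mul : X -> X -> X) inv (F : ((X -> Prop) -> Prop) -> Prop) :
  (forall h, F h -> quasitopological mul inv h) -> quasitopological mul inv (meet F).
Proof.
  intros H. unfold meet. split; [split; [|split]|split].
  - intros h Fh. destruct (H h Fh) as [[T1 [T2 T3]] [Q1 Q2]]. exact T1.
  - intros U V HU HV h Fh. destruct (H h Fh) as [[T1 [T2 T3]] [Q1 Q2]]. apply T2; [apply HU|apply HV]; exact Fh.
  - intros G HG h Fh. destruct (H h Fh) as [[T1 [T2 T3]] [Q1 Q2]]. apply T3. intros U GU. apply (HG U GU); exact Fh.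
  - intros U HU h Fh. destruct (H h Fh) as [[T1 [T2 T3]] [Q1 Q2]]. apply Q1; apply HU; exact Fh.
  - intros a U HU; split; intros h Fh; destruct (H h Fh) as [[T1 [T2 T3]] [Q1 Q2]]; apply Q2; apply HU; exact Fh.
Qed.

Lemma part1 {X} (mul : X -> X -> X) inv e O : is_group mul inv e -> quasitopological mul inv O ->
  forall (I : Type) (lt : I -> I -> Prop) (S : I -> (X -> Prop) -> Prop),
      well_order lt -> transfinite_seq mul O lt S ->
      forall a : I, quasitopological mul inv (S a).
Proof.
  intros G HO I lt S [wf _] [T0 [T1 T2]] a.
  induction a as [a IH] using (well_founded_ind wf).
  destruct (classic (exists b, lt b a)) as [Hex|Hno].
  - destruct (classic (exists b, lt b a /\ forall c, ~ (lt b c /\ lt c a))) as [[b [Hb Hc]]|Hlim].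
    + rewrite (top_ext _ _ (T1 a b Hb Hc)). apply (c_top_quasi mul inv e); auto.
    + assert (HL : forall b, lt b a -> exists c, lt b c /\ lt c a).
      { intros b Hb. apply NNPP. intros Hn. apply Hlim. exists b. split; auto.
        intros c Hc. apply Hn. exists c; exact Hc. }
      rewrite (top_ext _ _ (T2 a Hex HL)).
      assert (E : (fun U => forall b, lt b a -> S b U) = meet (fun h => exists b, lt b a /\ h = S b)).
      { apply top_ext. intros U; unfold meet; split.
        - intros H h [b [Hb ->]]. auto.
        - intros H b Hb. apply H. exists b; auto. }
      rewrite E. apply meet_quasi. intros h [b [Hb ->]]. auto.
  - rewrite (top_ext _ _ (T0 a (fun b Hb => Hno (ex_intro _ b Hb)))). exact HO.
Qed.

Lemma xeqb_refl {X} (x : X) : xeqb x x = true.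
Proof. unfold xeqb. destruct (excluded_middle_informative (x = x)); congruence. Qed.

Lemma cancel_inv {X} (x : bool * X) : cancelb x (letter_inv x) = true.
Proof. destruct x as [b y]. unfold cancelb, letter_inv; simpl. rewrite xeqb_refl. destruct b; reflexivity. Qed.

Lemma cancel_eq {X} (x b : bool * X) : cancelb x b = true -> b = letter_inv x.
Proof.
  destruct x as [b1 y1], b as [b2 y2]. unfold cancelb, letter_inv, xeqb; simpl.
  destruct (excluded_middle_informative (y1 = y2)) as [->|]; [|rewrite andb_false_r; discriminate].
  destruct b1, b2; simpl; congruence.
Qed.

Lemma letter_inv_inv {X} (x : bool * X) : letter_inv (letter_inv x) = x.
Proof. destruct x as [b y]; unfold letter_inv; simpl; rewrite negb_involutive; reflexivity. Qed.

Lemma cons_red_cancel {X} (x : bool * X) w : reduced w -> cons_red x (cons_red (letter_inv x) w) = w.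
Proof.
  intros Hw. destruct w as [|b w'].
  - simpl. rewrite cancel_inv. reflexivity.
  - simpl. destruct (cancelb (letter_inv x) b) eqn:E.
    + apply cancel_eq in E. rewrite letter_inv_inv in E. subst b.
      destruct w' as [|c w'']; simpl; [reflexivity|].
      simpl in Hw. destruct Hw as [Hc _]. rewrite Hc. reflexivity.
    + simpl. rewrite cancel_inv. reflexivity.
Qed.

Definition act {X} (s z : word X) : word X := fold_right cons_red z s.

Lemma act_reduced {X} (s z : word X) : reduced z -> reduced (act s z).
Proof. intros Hz; induction s; simpl; auto. apply cons_red_reduced; auto. Qed.

Lemma wnorm_act {X} (s : word X) : wnorm s = act s [].
Proof. reflexivity. Qed.

Lemma wnorm_id {X} (w : word X) : reduced w -> wnorm w = w.
Proof.
  induction w as [|x w IH]; intros H; [reflexivity|].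
  simpl. rewrite (IH (reduced_tail x w H)).
  destruct w as [|b w']; [reflexivity|]. simpl. simpl in H. destruct H as [H _]. rewrite H. reflexivity.
Qed.

Lemma act_cons_red {X} (x : bool * X) w z : reduced z -> act (cons_red x w) z = cons_red x (act w z).
Proof.
  intros Hz. destruct w as [|b w']; [reflexivity|].
  simpl. destruct (cancelb x b) eqn:E; [|reflexivity].
  apply cancel_eq in E. subst b. rewrite cons_red_cancel; [reflexivity|]. apply act_reduced; auto.
Qed.

Lemma act_wnorm {X} (s z : word X) : reduced z -> act (wnorm s) z = act s z.
Proof.
  intros Hz. induction s as [|x s IH]; [reflexivity|].
  simpl. rewrite act_cons_red; auto. rewrite IH; reflexivity.
Qed.

Lemma act_app {X} (s t z : word X) : act (s ++ t) z = act s (act t z).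
Proof. unfold act. apply fold_right_app. Qed.

Definition winv {X} (s : word X) : word X := rev (map letter_inv s).

Lemma act_winv {X} (s z : word X) : reduced z -> act (s ++ winv s) z = z.
Proof.
  revert z. induction s as [|x s IH]; intros z Hz; [reflexivity|].
  unfold winv; simpl. fold (winv s). rewrite app_assoc.
  rewrite act_app. simpl.
  rewrite IH by (apply cons_red_reduced; auto).
  apply cons_red_cancel; auto.
Qed.

Lemma fg_eq {X} (u v : FG X) : proj1_sig u = proj1_sig v -> u = v.
Proof. destruct u as [u Hu], v as [v Hv]; simpl; intros ->. f_equal; apply proof_irrelevance. Qed.

Lemma fg_cancel {X} (w a : FG X) : fg_mul w (fg_mul (fg_inv w) a) = a.
Proof.
  apply fg_eq. destruct w as [w Hw], a as [a Ha]. unfold fg_mul, fg_inv, fg_of; simpl.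
  fold (winv w).
  rewrite !wnorm_act, !act_app.
  assert (E1 : forall z : word X, reduced z -> act z [] = z) by (intros z Hz; rewrite <- wnorm_act; apply wnorm_id; auto).
  rewrite (E1 (act (act (winv w) []) (act a []))) by (apply act_reduced; apply act_reduced; exact I).
  rewrite <- (wnorm_act (winv w)), act_wnorm by (apply act_reduced; exact I).
  rewrite <- act_app, act_winv by (apply act_reduced; exact I).
  apply E1; auto.
Qed.

Definition lett {X} (inv : X -> X) (x : bool * X) : X := if fst x then snd x else inv (snd x).

Lemma meval_app {X} (mul : X -> X -> X) inv e : is_group mul inv e ->
  forall s t, meval mul inv e (s ++ t) = mul (meval mul inv e s) (meval mul inv e t).
Proof.
  intros (A & L & R & IL & IR) s t. induction s as [|x s IH]; simpl.
  - rewrite L; reflexivity.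
  - rewrite IH, A; reflexivity.
Qed.

Lemma meval_cons_red {X} (mul : X -> X -> X) inv e : is_group mul inv e ->
  forall x w, meval mul inv e (cons_red x w) = mul (lett inv x) (meval mul inv e w).
Proof.
  intros (A & L & R & IL & IR) x w. destruct w as [|b w']; [reflexivity|].
  simpl. destruct (cancelb x b) eqn:E; [|reflexivity].
  apply cancel_eq in E. subst b. simpl. rewrite A.
  destruct x as [[] y]; unfold letter_inv, lett; simpl; [rewrite IR|rewrite IL]; rewrite L; reflexivity.
Qed.

Lemma meval_act {X} (mul : X -> X -> X) inv e : is_group mul inv e ->
  forall s z, meval mul inv e (act s z) = mul (meval mul inv e s) (meval mul inv e z).
Proof.
  intros G s z. pose proof G as (A & L & R & IL & IR). induction s as [|x s IH]; simpl.
  - rewrite L; reflexivity.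
  - rewrite (meval_cons_red mul inv e G). rewrite IH, A. reflexivity.
Qed.

Lemma meval_wnorm {X} (mul : X -> X -> X) inv e : is_group mul inv e ->
  forall s, meval mul inv e (wnorm s) = meval mul inv e s.
Proof.
  intros G s. rewrite wnorm_act, (meval_act mul inv e G). destruct G as (A & L & R & IL & IR).
  simpl; apply R.
Qed.

Lemma meval_winv {X} (mul : X -> X -> X) inv e : is_group mul inv e ->
  forall s, meval mul inv e (winv s) = inv (meval mul inv e s).
Proof.
  intros G s. pose proof G as (A & L & R & IL & IR). induction s as [|x s IH].
  - simpl. rewrite <- (IL e) at 1. rewrite R. reflexivity.
  - unfold winv; simpl. fold (winv s). rewrite (meval_app mul inv e G), IH. simpl.
    rewrite (g_inv_mul mul inv e G), R. f_equal.
    destruct x as [[] y]; simpl; [reflexivity|]. symmetry; apply (g_inv_inv mul inv e G).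
Qed.

Definition mm {X} (mul : X -> X -> X) inv e (u : FG X) : X := meval mul inv e (proj1_sig u).

Lemma mm_mul {X} (mul : X -> X -> X) inv e : is_group mul inv e ->
  forall u v, mm mul inv e (fg_mul u v) = mul (mm mul inv e u) (mm mul inv e v).
Proof. intros G u v. unfold mm, fg_mul, fg_of; simpl. rewrite (meval_wnorm _ _ _ G). apply (meval_app _ _ _ G). Qed.

Lemma mm_inv {X} (mul : X -> X -> X) inv e : is_group mul inv e ->
  forall u, mm mul inv e (fg_inv u) = inv (mm mul inv e u).
Proof. intros G u. unfold mm, fg_inv, fg_of; simpl. rewrite (meval_wnorm _ _ _ G). apply (meval_winv _ _ _ G). Qed.

Lemma mm_eta {X} (mul : X -> X -> X) inv e : is_group mul inv e ->
  forall x, mm mul inv e (fg_eta x) = x.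
Proof. intros (A & L & R & IL & IR) x. unfold mm, fg_eta, fg_of; simpl. apply R. Qed.

Lemma FM_topology {X} (OS : (X -> Prop) -> Prop) : is_topology (FM_open OS).
Proof.
  unfold FM_open. split; [|split].
  - intros O HO _. apply HO.
  - intros U V HU HV O HO H. pose proof HO as (a & b & c). apply b; [apply HU|apply HV]; auto.
  - intros F HF O HO H. pose proof HO as (a & b & c). apply c. intros U FU. apply HF; auto.
Qed.

Lemma FM_contains {X} (OS : (X -> Prop) -> Prop) (O' : (FG X -> Prop) -> Prop) :
  group_topology (@fg_mul X) (@fg_inv X) O' ->
  (forall V, O' V -> OS (fun x : X => V (fg_eta x))) -> forall V, O' V -> FM_open OS V.
Proof. intros G C V HV O HO H. apply (H O' G C V HV). Qed.

Lemma FM_prod {X} (OS : (X -> Prop) -> Prop) W : FM_open OS W ->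
  prod_open (FM_open OS) (FM_open OS) (fun p => W (fg_mul (fst p) (snd p))).
Proof.
  intros HW.
  assert (HT : is_topology (fun W => FM_open OS W /\
     prod_open (FM_open OS) (FM_open OS) (fun p => W (fg_mul (fst p) (snd p))))).
  { pose proof (FM_topology OS) as HF. pose proof HF as (Hf & Hi & Hu).
    pose proof (c_top_topology (@fg_mul X) _ HF) as (Cf & Ci & Cu). unfold c_top in *.
    split; [|split].
    - split; auto.
    - intros U V [] []; split; auto.
    - intros F H. split.
      + apply Hu. intros U FU; apply H; auto.
      + apply Cu. intros U FU; apply H; auto. }
  apply (HW _ HT). intros O' G C V HV. split.
  - apply (FM_contains OS O' G C V HV).
  - eapply prod_open_mono; [| |destruct G as (_ & _ & Gm); apply Gm; exact HV];
    apply (FM_contains OS O' G); auto.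
Qed.

Lemma FM_transl {X} (OS : (X -> Prop) -> Prop) W g : FM_open OS W -> FM_open OS (fun u => W (fg_mul u g)).
Proof.
  intros HW. apply open_of_nbhd; [apply FM_topology|]. intros x Wx.
  destruct (FM_prod OS W HW (x, g) Wx) as (U & V & HU & HV & Ux & Vg & H).
  exists U; split; [exact HU|split; [exact Ux|]]. intros y Uy. apply (H y g Uy Vg).
Qed.

Lemma open_map {X} (mul : X -> X -> X) inv e (OS : (X -> Prop) -> Prop) : is_group mul inv e ->
  forall A, FM_open OS A -> FM_open OS (fun w => exists a, A a /\ mm mul inv e w = mm mul inv e a).
Proof.
  intros G A HA. pose proof G as (GA & L & R & IL & IR).
  apply open_of_nbhd; [apply FM_topology|]. intros w [a [Aa Ew]].
  set (g := fg_mul (fg_inv w) a).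
  exists (fun u => A (fg_mul u g)). split; [apply FM_transl; exact HA|split].
  - unfold g. rewrite fg_cancel. exact Aa.
  - intros u Au. exists (fg_mul u g). split; [exact Au|].
    rewrite (mm_mul _ _ _ G). unfold g. rewrite (mm_mul _ _ _ G), (mm_inv _ _ _ G), <- Ew, IL, R.
    reflexivity.
Qed.

Lemma tau_sub_O {X} (mul : X -> X -> X) inv e O : is_group mul inv e -> is_topology O ->
  forall V, tau_open mul inv e O V -> O V.
Proof.
  intros G HO V HV.
  assert (HT : is_topology (fun W : FG X -> Prop => O (fun x => W (fg_eta x)))).
  { pose proof HO as (a & b & c). split; [|split].
    - exact a.
    - intros U W HU HW. apply b; auto.
    - intros F HF. apply (open_ext O (fun x => exists U, (fun U' => exists W, F W /\ U' = (fun y => W (fg_eta y))) U /\ U x)).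
      + apply c. intros U [W [FW ->]]. apply HF; auto.
      + intros x; split.
        * intros [U [[W [FW ->]] Ux]]. exists W; auto.
        * intros [W [FW Wx]]. exists (fun y => W (fg_eta y)). split; auto. exists W; auto. }
  specialize (HV _ HT (fun O' _ C => C)). simpl in HV.
  apply (open_ext O _ _ HV). intros x. destruct G as (_ & _ & R & _). rewrite R. tauto.
Qed.

Lemma tau_c {X} (mul : X -> X -> X) inv e O (H : (X -> Prop) -> Prop) : is_group mul inv e ->
  (forall V, tau_open mul inv e O V -> H V) ->
  forall V, tau_open mul inv e O V -> c_top mul H V.
Proof.
  intros G Hs V HV [x y] Vxy. simpl in Vxy.
  pose proof (FM_prod O _ HV (fg_eta x, fg_eta y)) as HP.
  change (V (mm mul inv e (fg_mul (fg_eta x) (fg_eta y))) -> exists U V0, FM_open O U /\ FM_open O V0 /\ U (fg_eta x) /\ V0 (fg_eta y) /\ (forall a b, U a -> V0 b -> V (mm mul inv e (fg_mul a b)))) in HP. rewrite (mm_mul _ _ _ G), !(mm_eta _ _ _ G) in HP.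
  destruct (HP Vxy) as (A & B & HA & HB & Ax & By & HAB).
  exists (fun z => exists a, A a /\ z = mm mul inv e a), (fun z => exists a, B a /\ z = mm mul inv e a).
  split; [|split; [|split; [|split]]].
  - apply Hs. unfold tau_open. apply (open_map mul inv e O G A HA).
  - apply Hs. unfold tau_open. apply (open_map mul inv e O G B HB).
  - exists (fg_eta x). rewrite (mm_eta _ _ _ G). auto.
  - exists (fg_eta y). rewrite (mm_eta _ _ _ G). auto.
  - intros x' y' [a [Aa ->]] [b [Bb ->]]. simpl. rewrite <- (mm_mul _ _ _ G). apply (HAB a b Aa Bb).
Qed.

Lemma group_sub_tau {X} (mul : X -> X -> X) inv e O (T : (X -> Prop) -> Prop) : is_group mul inv e ->
  group_topology mul inv T -> (forall V, T V -> O V) ->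
  forall V, T V -> tau_open mul inv e O V.
Proof.
  intros G [HT [Ti Tm]] TO V HV Om HOm Hm.
  pose proof HT as (Tf & Tint & Tu).
  set (O' := fun W : FG X -> Prop => exists V', T V' /\ forall u, W u <-> V' (mm mul inv e u)).
  assert (GO : group_topology (@fg_mul X) (@fg_inv X) O').
  { split; [split; [|split]|split].
    - exists (fun _ => True). split; [exact Tf|tauto].
    - intros U W [U' [HU' EU]] [W' [HW' EW]]. exists (fun x => U' x /\ W' x). split; [apply Tint; auto|].
      intros u. rewrite EU, EW. tauto.
    - intros F HF.
      exists (fun x => exists V'', (T V'' /\ exists W, F W /\ forall u, W u <-> V'' (mm mul inv e u)) /\ V'' x).
      split.
      + apply Tu. intros U [HU _]; exact HU.
      + intros u; split.
        * intros [W [FW Wu]]. destruct (HF W FW) as [V'' [HV'' E]]. exists V''. split.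
          -- split; [exact HV''|]. exists W; auto.
          -- apply E; auto.
        * intros [V'' [[HV'' [W [FW E]]] Vu]]. exists W. split; auto. apply E; auto.
    - intros W [V' [HV' E]]. exists (fun x => V' (inv x)). split; [apply Ti; auto|].
      intros u. rewrite E, (mm_inv _ _ _ G). tauto.
    - intros W [V' [HV' E]] [u v] Wuv. simpl in Wuv. rewrite E, (mm_mul _ _ _ G) in Wuv.
      destruct (Tm V' HV' (mm mul inv e u, mm mul inv e v) Wuv) as (U1 & V1 & HU1 & HV1 & Uu & Vv & H).
      exists (fun a => U1 (mm mul inv e a)), (fun b => V1 (mm mul inv e b)).
      split; [exists U1; split; [auto|tauto]|].
      split; [exists V1; split; [auto|tauto]|].
      split; [exact Uu|split; [exact Vv|]].
      intros a b Ua Vb. simpl. apply E. rewrite (mm_mul _ _ _ G). apply (H _ _ Ua Vb). }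
  apply (Hm O' GO).
  - intros W [V' [HV' E]]. apply (open_ext O V'); [apply TO; auto|].
    intros x. rewrite E, (mm_eta _ _ _ G). tauto.
  - exists V. split; [exact HV|]. intros u. unfold mm. tauto.
Qed.

Inductive tower {X} (mul : X -> X -> X) (O : (X -> Prop) -> Prop) : ((X -> Prop) -> Prop) -> Prop :=
| tw_O : tower mul O O
| tw_f h : tower mul O h -> tower mul O (c_top mul h)
| tw_m (F : ((X -> Prop) -> Prop) -> Prop) :
    (forall h, F h -> tower mul O h) -> (exists h, F h) -> tower mul O (meet F).

Definition le {X} (a b : (X -> Prop) -> Prop) : Prop := forall U, b U -> a U.

Lemma le_refl {X} (a : (X -> Prop) -> Prop) : le a a.
Proof. intros U H; exact H. Qed.
Lemma le_trans {X} (a b c : (X -> Prop) -> Prop) : le a b -> le b c -> le a c.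
Proof. intros H1 H2 U H; auto. Qed.
Lemma le_antisym {X} (a b : (X -> Prop) -> Prop) : le a b -> le b a -> a = b.
Proof. intros H1 H2. apply top_ext. intros U; split; auto. Qed.

Lemma tw_quasi {X} (mul : X -> X -> X) inv e O : is_group mul inv e -> quasitopological mul inv O ->
  forall t, tower mul O t -> quasitopological mul inv t.
Proof.
  intros G HO t Ht. induction Ht as [|h Hh IH|F HF IH Hne].
  - exact HO.
  - apply (c_top_quasi mul inv e); auto.
  - apply meet_quasi; auto.
Qed.

Lemma tw_subO {X} (mul : X -> X -> X) inv e O : is_group mul inv e -> quasitopological mul inv O ->
  forall t, tower mul O t -> le O t.
Proof.
  intros G HO t Ht. induction Ht as [|h Hh IH|F HF IH Hne].
  - apply le_refl.
  - intros U HU. apply IH. apply (c_top_sub mul inv e); auto.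
    apply (tw_quasi mul inv e O G HO h Hh).
  - destruct Hne as [h Fh]. intros U HU. apply (IH h Fh). apply HU; auto.
Qed.

Lemma tw_f_le {X} (mul : X -> X -> X) inv e O : is_group mul inv e -> quasitopological mul inv O ->
  forall t, tower mul O t -> le t (c_top mul t).
Proof.
  intros G HO t Ht U HU. apply (c_top_sub mul inv e); auto. apply (tw_quasi mul inv e O G HO t Ht).
Qed.

Definition extreme {X} (mul : X -> X -> X) O (c : (X -> Prop) -> Prop) : Prop :=
  forall s, tower mul O s -> le s c -> s <> c -> le (c_top mul s) c.

Lemma LA {X} (mul : X -> X -> X) inv e O : is_group mul inv e -> quasitopological mul inv O ->
  forall c, tower mul O c -> extreme mul O c ->
  forall s, tower mul O s -> le s c \/ le (c_top mul c) s.
Proof.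
  intros G HO c Hc Ec s Hs. induction Hs as [|h Hh IH|F HF IH Hne].
  - left. apply (tw_subO mul inv e O G HO c Hc).
  - destruct IH as [IH|IH].
    + destruct (classic (h = c)) as [->|Hn].
      * right. apply le_refl.
      * left. apply Ec; auto.
    + right. eapply le_trans; [exact IH|]. apply (tw_f_le mul inv e O G HO h Hh).
  - destruct (classic (forall h, F h -> le h c)) as [Hall|Hn].
    + left. intros U HU h Fh. apply (Hall h Fh); auto.
    + apply not_all_ex_not in Hn. destruct Hn as [h Hn].
      apply imply_to_and in Hn. destruct Hn as [Fh Hn].
      destruct (IH h Fh) as [H|H]; [contradiction|].
      right. intros U HU. apply H. apply HU; auto.
Qed.

Lemma LB {X} (mul : X -> X -> X) inv e O : is_group mul inv e -> quasitopological mul inv O ->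
  forall c, tower mul O c -> extreme mul O c.
Proof.
  intros G HO c Hc. induction Hc as [|c' Hc' IH|F HF IH Hne].
  - intros s Hs Hle Hn. exfalso. apply Hn. apply le_antisym; [exact Hle|apply (tw_subO mul inv e O G HO s Hs)].
  - intros s Hs Hle Hn. destruct (LA mul inv e O G HO c' Hc' IH s Hs) as [H|H].
    + destruct (classic (s = c')) as [->|Hn'].
      * apply le_refl.
      * eapply le_trans; [apply IH; auto|]. apply (tw_f_le mul inv e O G HO c' Hc').
    + exfalso. apply Hn. apply le_antisym; auto.
  - intros s Hs Hle Hn.
    destruct (classic (exists h, F h /\ ~ le h s)) as [[h [Fh Hhs]]|Hno].
    + destruct (LA mul inv e O G HO h (HF h Fh) (IH h Fh) s Hs) as [H|H].
      * assert (s <> h) by (intros ->; apply Hhs, le_refl).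
        eapply le_trans; [apply (IH h Fh); auto|]. intros U HU. apply HU; auto.
      * exfalso. apply Hhs. eapply le_trans; [|exact H]. apply (tw_f_le mul inv e O G HO h (HF h Fh)).
    + exfalso. apply Hn. apply le_antisym; auto.
      intros U HU h Fh. apply NNPP. intros Hu. apply Hno. exists h. split; [exact Fh|].
      intros Hl. apply Hu, Hl, HU.
Qed.

Lemma LA' {X} (mul : X -> X -> X) inv e O : is_group mul inv e -> quasitopological mul inv O ->
  forall c s, tower mul O c -> tower mul O s -> le s c \/ le (c_top mul c) s.
Proof. intros G HO c s Hc Hs. apply (LA mul inv e O G HO c Hc (LB mul inv e O G HO c Hc) s Hs). Qed.

Lemma chain {X} (mul : X -> X -> X) inv e O : is_group mul inv e -> quasitopological mul inv O ->
  forall c s, tower mul O c -> tower mul O s -> le s c \/ le c s.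
Proof.
  intros G HO c s Hc Hs. destruct (LA' mul inv e O G HO c s Hc Hs) as [H|H]; [left; auto|right].
  eapply le_trans; [|exact H]. apply (tw_f_le mul inv e O G HO c Hc).
Qed.

Lemma fix_top {X} (mul : X -> X -> X) inv e O : is_group mul inv e -> quasitopological mul inv O ->
  forall b, tower mul O b -> c_top mul b = b -> forall t, tower mul O t -> le t b.
Proof.
  intros G HO b Hb Fb t Ht. induction Ht as [|h Hh IH|F HF IH Hne].
  - apply (tw_subO mul inv e O G HO b Hb).
  - rewrite <- Fb. intros U HU. apply (c_top_mono mul b h IH U HU).
  - intros U HU h Fh. apply (IH h Fh); auto.
Qed.

Definition TI {X} (mul : X -> X -> X) O := { t : (X -> Prop) -> Prop | tower mul O t }.
Definition tlt {X} (mul : X -> X -> X) O (x y : TI mul O) : Prop :=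
  le (proj1_sig x) (proj1_sig y) /\ proj1_sig x <> proj1_sig y.

Lemma TI_eq {X} (mul : X -> X -> X) O (x y : TI mul O) : proj1_sig x = proj1_sig y -> x = y.
Proof. destruct x, y; simpl; intros ->; f_equal; apply proof_irrelevance. Qed.

Lemma tlt_wf {X} (mul : X -> X -> X) inv e O : is_group mul inv e -> quasitopological mul inv O ->
  well_founded (tlt mul O).
Proof.
  intros G HO.
  assert (Good : forall t, tower mul O t -> forall s (Hs : tower mul O s), le s t -> Acc (tlt mul O) (exist _ s Hs)).
  { intros t Ht. induction Ht as [|h Hh IH|F HF IH Hne].
    - intros s Hs Hle. constructor. intros [y Hy] [Hly Hny]; simpl in *. exfalso.
      assert (s = O) by (apply le_antisym; [exact Hle|apply (tw_subO mul inv e O G HO s Hs)]). subst s.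
      apply Hny. apply le_antisym; [exact Hly|apply (tw_subO mul inv e O G HO y Hy)].
    - assert (K : forall s, tower mul O s -> le s (c_top mul h) -> s <> c_top mul h -> le s h).
      { intros s Hs Hle Hn. destruct (LA' mul inv e O G HO h s Hh Hs) as [H|H]; auto.
        exfalso; apply Hn; apply le_antisym; auto. }
      intros s Hs Hle. destruct (classic (s = c_top mul h)) as [->|Hn].
      + constructor. intros [y Hy] [Hly Hny]; simpl in *. apply IH. apply K; auto.
      + apply IH. apply K; auto.
    - assert (K : forall s, tower mul O s -> le s (meet F) -> s <> meet F -> exists h, F h /\ le s h).
      { intros s Hs Hle Hn.
        destruct (classic (exists h, F h /\ ~ le h s)) as [[h [Fh Hhs]]|Hno].
        - exists h. split; auto. destruct (chain mul inv e O G HO h s (HF h Fh) Hs) as [H|H]; auto.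
          contradiction.
        - exfalso. apply Hn. apply le_antisym; auto.
          intros U HU h Fh. apply NNPP. intros Hu. apply Hno. exists h. split; [exact Fh|].
          intros Hl. apply Hu, Hl, HU. }
      intros s Hs Hle. destruct (classic (s = meet F)) as [->|Hn].
      + constructor. intros [y Hy] [Hly Hny]; simpl in *.
        destruct (K y Hy Hly Hny) as [h [Fh Hyh]]. apply (IH h Fh). exact Hyh.
      + destruct (K s Hs Hle Hn) as [h [Fh Hsh]]. apply (IH h Fh). exact Hsh. }
  intros [s Hs]. apply (Good s Hs s Hs (le_refl s)).
Qed.

Lemma tlt_wo {X} (mul : X -> X -> X) inv e O : is_group mul inv e -> quasitopological mul inv O ->
  well_order (tlt mul O).
Proof.
  intros G HO. split; [apply (tlt_wf mul inv e O G HO)|split].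
  - intros [a Ha] [b Hb] [c Hc] [H1 N1] [H2 N2]; unfold tlt; simpl in *. split; [eapply le_trans; eauto|].
    intros ->. apply N1. apply le_antisym; [exact H1|exact H2].
  - intros [a Ha] [b Hb]. destruct (classic (a = b)) as [->|Hn].
    + right; left. apply TI_eq; reflexivity.
    + destruct (chain mul inv e O G HO b a Hb Ha) as [H|H].
      * left. split; auto.
      * right; right. split; simpl; auto.
Qed.

Lemma tlt_seq {X} (mul : X -> X -> X) inv e O : is_group mul inv e -> quasitopological mul inv O ->
  transfinite_seq mul O (tlt mul O) (fun x => proj1_sig x).
Proof.
  intros G HO. split; [|split].
  - intros [a Ha] H; simpl. intros U.
    destruct (classic (a = O)) as [->|Hn]; [tauto|].
    exfalso. apply (H (exist _ O (tw_O mul O))). split; simpl.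
    + apply (tw_subO mul inv e O G HO a Ha).
    + intros ->; apply Hn; reflexivity.
  - intros [a Ha] [b Hb] [Hle Hn] Hbet; simpl in *.
    assert (E : a = c_top mul b).
    { destruct (LA' mul inv e O G HO b a Hb Ha) as [H|H].
      - exfalso. apply Hn. apply le_antisym; auto.
      - destruct (classic (c_top mul b = b)) as [Fb|Fn].
        + exfalso. apply Hn. apply le_antisym; auto. apply (fix_top mul inv e O G HO b Hb Fb a Ha).
        + apply NNPP. intros Hna. apply (Hbet (exist _ (c_top mul b) (tw_f mul O b Hb))).
          split; split; simpl.
          * apply (tw_f_le mul inv e O G HO b Hb).
          * intros Hbb. apply Fn. symmetry; exact Hbb.
          * exact H.
          * intros Hh; apply Hna; symmetry; exact Hh. }
    subst a. intros U; tauto.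
  - intros [a Ha] Hex Hlim; simpl.
    set (F := fun h => exists y : TI mul O, tlt mul O y (exist _ a Ha) /\ h = proj1_sig y).
    assert (HmT : tower mul O (meet F)).
    { apply tw_m.
      - intros h [[y Hy] [_ ->]]; exact Hy.
      - destruct Hex as [y Hy]. exists (proj1_sig y). exists y; auto. }
    assert (E : a = meet F).
    { apply NNPP. intros Hn.
      destruct (Hlim (exist _ (meet F) HmT)) as [c [Hc1 Hc2]].
      - split; simpl.
        + intros U HU h [y [[Hy1 _] ->]]. apply Hy1. exact HU.
        + intros Heq; apply Hn; symmetry; exact Heq.
      - destruct Hc1 as [L1 N1]. apply N1. apply le_antisym; [exact L1|].
        intros U HU. apply HU. exists c; auto. }
    intros U. split.
    + intros H b [Hb _]. apply Hb. exact H.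
    + intros H. assert (M : meet F U) by (intros h [y [Hy ->]]; apply H; exact Hy).
      rewrite E. exact M.
Qed.

Theorem theorem3p8 (X : Type) (mul : X -> X -> X) (inv : X -> X) (e : X)
  (O : (X -> Prop) -> Prop)
  (Hgrp : is_group mul inv e) (Hq : quasitopological mul inv O) :
  (forall (I : Type) (lt : I -> I -> Prop) (S : I -> (X -> Prop) -> Prop),
      well_order lt -> transfinite_seq mul O lt S ->
      forall a : I, quasitopological mul inv (S a)) /\
  (exists (I : Type) (lt : I -> I -> Prop) (S : I -> (X -> Prop) -> Prop) (a : I),
      well_order lt /\ transfinite_seq mul O lt S /\
      same_top (S a) (tau_open mul inv e O)).
Proof.
  split; [apply (part1 mul inv e O Hgrp Hq)|].
  set (ts := meet (tower mul O)).
  assert (Hts : tower mul O ts) by (apply tw_m; [auto|exists O; apply tw_O]).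
  assert (Fix : c_top mul ts = ts).
  { apply le_antisym.
    - intros U HU. apply HU. apply tw_f; exact Hts.
    - apply (tw_f_le mul inv e O Hgrp Hq ts Hts). }
  exists (TI mul O), (tlt mul O), (fun x => proj1_sig x), (exist _ ts Hts).
  split; [apply (tlt_wo mul inv e O Hgrp Hq)|split; [apply (tlt_seq mul inv e O Hgrp Hq)|]].
  simpl. intros V. split.
  - apply (group_sub_tau mul inv e O ts Hgrp).
    + destruct (tw_quasi mul inv e O Hgrp Hq ts Hts) as [T1 [T2 _]].
      split; [exact T1|split; [exact T2|]].
      intros W HW. rewrite <- Fix in HW. exact HW.
    + apply (tw_subO mul inv e O Hgrp Hq ts Hts).
  - intros HV. assert (K : forall t, tower mul O t -> forall V, tau_open mul inv e O V -> t V).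
    { intros t Ht. induction Ht as [|h Hh IH|F HF IH Hne]; intros W HW.
      - apply (tau_sub_O mul inv e O Hgrp); [apply Hq|exact HW].
      - apply (tau_c mul inv e O h Hgrp IH W HW).
      - intros h Fh. apply (IH h Fh W HW). }
    apply (K ts Hts V HV).
Qed.
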